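(* With the convention $g_1(0)=h_1(0)=0$, $$\sum_{M\geq1}(g_1(M)-g_1(M-1))x^M=\frac{x^2-x^3}{(1-x-x^2)^2}=\sum_{M\geq1}(h_1(M)-h_1(M-1))x^M,$$ and $$\sum_{M\geq1}(g(M)-h(M))x^M=\frac{x^2-x^3}{(1-x-x^2)^2}.$$
   Context: The perimeter of a nonempty partition $\lambda$ with largest part $\lambda_1$ and $\ell(\lambda)$ parts is $\lambda_1+\ell(\lambda)-1$. $\mathcal G(M)$ is the set of partitions into odd parts with perimeter $M$, $\mathcal H(M)$ the set of partitions into distinct parts with perimeter $M$; $g(M)$ (resp. $h(M)$) is the total number of parts, summed over all partitions in $\mathcal G(M)$ (resp. $\mathcal H(M)$). $\mathcal G_1(M)$ is the set of partitions with perimeter $M$ in which exactly one distinct even integer occurs as a part (possibly with multiplicity greater than one) and all other parts are odd; $\mathcal H_1(M)$ is the set of partitions with perimeter $M$ in which exactly one part value occurs at least twice and every other part value occurs exactly once. $g_1(M)=|\mathcal G_1(M)|$, $h_1(M)=|\mathcal H_1(M)|$. *)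

(* Defs.v *)
From mathcomp Require Import all_boot all_order all_algebra.
Set Implicit Arguments. Unset Strict Implicit. Unset Printing Implicit Defensive.
Import GRing.Theory.

Definition is_partition (s : seq nat) : bool :=
  sorted geq s && all (fun x => 0 < x) s.

Definition perimeter (s : seq nat) : nat := head 0 s + size s - 1.

Fixpoint seqs_upto (m l : nat) : seq (seq nat) :=
  match l with
  | 0 => [:: [::]]
  | l'.+1 => [::] :: [seq x :: s | x <- iota 1 m, s <- seqs_upto m l']
  end.

(* The (finite) list of all nonempty partitions with perimeter M satisfying P.
   A nonempty partition of perimeter M has largest part <= M and at most M parts,
   so it appears in seqs_upto M M. *)
Definition parts_perim (P : seq nat -> bool) (M : nat) : seq (seq nat) :=
  [seq s <- undup (seqs_upto M M) |
     is_partition s && (s != [::]) && (perimeter s == M) && P s].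

Definition odd_parts (s : seq nat) : bool := all odd s.
Definition distinct_parts (s : seq nat) : bool := uniq s.
Definition one_even_value (s : seq nat) : bool :=
  size (undup [seq x <- s | ~~ odd x]) == 1.
Definition one_repeated_value (s : seq nat) : bool :=
  size [seq x <- undup s | 1 < count_mem x s] == 1.

Definition g (M : nat) : nat := sumn [seq size s | s <- parts_perim odd_parts M].
Definition h (M : nat) : nat := sumn [seq size s | s <- parts_perim distinct_parts M].
Definition g1 (M : nat) : nat := size (parts_perim one_even_value M).
Definition h1 (M : nat) : nat := size (parts_perim one_repeated_value M).

(* [gf_eq a P Q]: the formal power series sum_n a n x^n equals P(x)/Q(x),
   stated as the coefficientwise identity (sum_n a n x^n) * Q(x) = P(x)
   (Q has constant term 1, so it is invertible in Z[[x]]). *)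
Definition gf_eq (a : nat -> int) (P Q : {poly int}) : Prop :=
  forall n : nat, (\sum_(k < n.+1) a k * Q`_(n - k) = P`_n)%R.

Definition diff_seq (f : nat -> nat) (M : nat) : int :=
  if M is 0 then 0%R else ((f M)%:Z - (f M.-1)%:Z)%R.

(* Main.v *)
Require Import Defs.
From mathcomp Require Import all_boot all_order all_algebra.
From mathcomp Require Import zify ring lra.
Set Implicit Arguments. Unset Strict Implicit. Unset Printing Implicit Defensive.

Definition incp (s : seq nat) := if s is h :: r then h.+1 :: r else [::].
Definition dupp (s : seq nat) := if s is h :: r then h :: h :: r else [::].

Fixpoint Pm (M : nat) : seq (seq nat) :=
  match M with
  | 0 => [::]
  | 1 => [:: [:: 1]]
  | M'.+1 => map incp (Pm M') ++ map dupp (Pm M')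
  end.

Lemma Pm_S M : 0 < M -> Pm M.+1 = map incp (Pm M) ++ map dupp (Pm M).
Proof. by case: M. Qed.

Lemma part_cons h r :
  is_partition (h :: r) = [&& 0 < h, head 0 r <= h & is_partition r].
Proof.
rewrite /is_partition; case: r => [|b r] /=; first by rewrite andbT.
by case: (0 < h); case: (b <= h); rewrite /= ?andbF //.
Qed.

Lemma perim_cons h r : perimeter (h :: r) = h + size r.
Proof. by rewrite /perimeter /= addnS subn1. Qed.

Lemma part_head_max h r : is_partition (h :: r) -> all (fun x => x <= h) r.
Proof.
case/andP=> /= Hs _.
have := order_path_min _ Hs; apply => y x z /= H1 H2.
exact: leq_trans H2 H1.
Qed.

Lemma part_pos s : is_partition s -> all (fun x => 0 < x) s.
Proof. by case/andP. Qed.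

Ltac bsolve := rewrite ?andbT; repeat (apply/andP; split); try (apply/eqP); try done; try lia.

Lemma Pm_mem M s :
  (s \in Pm M) = [&& is_partition s, s != [::] & perimeter s == M].
Proof.
elim: M s => [|M IH] s.
  case: s => [|h r] //=; rewrite in_nil perim_cons part_cons.
  by case: h => // h; rewrite addSn andbF.
case: (posnP M) => [->|Mpos].
  rewrite /= in_cons in_nil orbF.
  case: s => [|h r] //; rewrite perim_cons part_cons.
  case: r => [|b r] /=.
    by rewrite addn0 /is_partition /=; case: h => [|[|h]].
  rewrite eqseq_cons /= andbF; apply/esym/negbTE/negP => /andP[/and3P[? ? ?] /eqP ?]; lia.
rewrite Pm_S // mem_cat; apply/idP/idP.
  case/orP=> /mapP [t Ht ->]; move: Ht; rewrite IH;
    (case: t => [|h r] //; rewrite part_cons perim_cons => /and3P[/and3P[H0 H1 H2] _ /eqP E]).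
    rewrite /= part_cons perim_cons H2 /= andbT; apply/andP; split; [lia|apply/eqP; lia].
  rewrite /= !part_cons perim_cons /= H0 H1 H2 /= leqnn /=; apply/eqP; lia.
case: s => [|h r] //; rewrite part_cons perim_cons => /and3P[/and3P[H0 H1 H2] _ /eqP E].
case: r H1 H2 E => [|b r] H1 H2 E.
  apply/orP; left; apply/mapP; exists [:: h.-1]; last by rewrite /= prednK //.
  rewrite IH /= part_cons perim_cons /is_partition /=; move: E => /= E; bsolve.
move: H1 => /= H1.
case: (ltngtP b h) H1 => // [Hlt|Heq] _.
  apply/orP; left; apply/mapP; exists (h.-1 :: b :: r); last by rewrite /= prednK //.
  rewrite IH part_cons perim_cons H2 /=; move: H2; rewrite part_cons => /and3P[Hb _ _].
  move: E => /= E; bsolve.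
apply/orP; right; apply/mapP; exists (b :: r); last by rewrite /= Heq.
rewrite IH H2 perim_cons /=; move: E => /= E; bsolve.
Qed.

Lemma Pm_uniq M : uniq (Pm M).
Proof.
elim: M => [|M IH] //; case: (posnP M) => [->//|Mpos].
rewrite Pm_S // cat_uniq; apply/and3P; split.
- rewrite map_inj_in_uniq // => x y; rewrite !Pm_mem.
  by case: x => [|hx rx] //; case: y => [|hy ry] //= _ _ [-> ->].
- apply/hasPn => y /mapP [t Ht ->]; apply/mapP => [[u Hu E]].
  move: Hu E; rewrite Pm_mem; case: u => [|hu ru] //; case: t Ht => [|ht rt] //.
  rewrite part_cons => _ /and3P[/and3P[_ H1 _] _ _] /= [E1 E2].
  by move: H1; rewrite -E2 /= E1; lia.
- rewrite map_inj_in_uniq // => x y; rewrite !Pm_mem.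
  by case: x => [|hx rx] //; case: y => [|hy ry] //= _ _ [-> _ ->].
Qed.
Lemma seqs_upto_mem m l s :
  all (fun x => 0 < x <= m) s -> size s <= l -> s \in seqs_upto m l.
Proof.
elim: l s => [|l IH] [|x s] //=; try by rewrite in_cons eqxx.
case/andP=> Hx Hs Hl; rewrite in_cons /=; apply/allpairsP.
exists (x, s) => /=; split => //; last exact: IH.
by rewrite mem_iota; lia.
Qed.

Lemma pp_perm Q M : perm_eq (parts_perim Q M) (filter Q (Pm M)).
Proof.
apply: uniq_perm; first by rewrite filter_uniq ?undup_uniq.
  by rewrite filter_uniq ?Pm_uniq.
move=> s; rewrite !mem_filter Pm_mem mem_undup.
case: s => [|h r]; first by rewrite !andbF.
case Hp: (is_partition (h :: r)) => //=; case E: (perimeter (h :: r) == M) => //=;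
  try by rewrite !andbF.
rewrite andbT; case: (Q _) => //=; apply: seqs_upto_mem.
  have := part_head_max Hp; have := part_pos Hp.
  move: E; rewrite perim_cons /= => /eqP E /andP[H0 Hr0] Hr.
  apply/andP; split; first by apply/andP; split => //; lia.
  apply/allP => x Hx; move: (allP Hr x Hx) (allP Hr0 x Hx) => ? ?; lia.
move: E Hp; rewrite perim_cons part_cons /= => /eqP E /and3P[? _ _]; lia.
Qed.

Definition Sm (f : seq nat -> nat) M := \sum_(s <- Pm M) f s.

Lemma Sm_S f M : 0 < M -> Sm f M.+1 = Sm (fun s => f (incp s)) M + Sm (fun s => f (dupp s)) M.
Proof. by move=> H; rewrite /Sm Pm_S // big_cat !big_map. Qed.

Lemma count_Sm Q M : size (parts_perim Q M) = Sm (fun s => Q s : nat) M.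
Proof.
rewrite (perm_size (pp_perm Q M)) size_filter /Sm.
elim: (Pm M) => [|x l IH]; by rewrite ?big_nil ?big_cons //= IH.
Qed.

Lemma sum_Sm Q M : sumn [seq size s | s <- parts_perim Q M] = Sm (fun s => Q s * size s) M.
Proof.
rewrite (perm_sumn (perm_map _ (pp_perm Q M))) /Sm.
elim: (Pm M) => [|x l IH]; rewrite ?big_nil ?big_cons //=.
by case: (Q x) => /=; rewrite ?IH // mul1n.
Qed.

Lemma Sm_ext f1 f2 M : (forall s, s \in Pm M -> f1 s = f2 s) -> Sm f1 M = Sm f2 M.
Proof. by move=> H; apply: eq_big_seq. Qed.

Lemma Sm_add f1 f2 M : Sm (fun s => f1 s + f2 s) M = Sm f1 M + Sm f2 M.
Proof. by rewrite /Sm big_split. Qed.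

Lemma Sm0 M : Sm (fun _ => 0) M = 0.
Proof. by rewrite /Sm big1. Qed.
Lemma part_mem_head h r : is_partition (h :: r) -> (h \in r) = (h == head 0 r).
Proof.
rewrite part_cons; case: r => [|b r] //=; first by case: h.
case/and3P=> _ Hb Hr; rewrite in_cons.
case: (eqVneq h b) => //= Hne; apply/negbTE/negP => Hin.
have := part_head_max Hr; move/allP/(_ h Hin) => ?; lia.
Qed.

Lemma Pm_cons M s : s \in Pm M -> exists h r, s = h :: r /\ is_partition (h :: r).
Proof. rewrite Pm_mem; case: s => [|h r] // /and3P[Hp _ _]; by exists h, r. Qed.

Lemma part_inc_ne h r : is_partition (h :: r) -> (h.+1 == head 0 r) = false.
Proof. rewrite part_cons => /and3P[_ H _]; apply/negbTE; lia. Qed.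

Definition oO (s : seq nat) := all odd s.
Definition oE (s : seq nat) := if s is h :: r then all odd r && ~~ odd h else false.
Definition dA (s : seq nat) := uniq s.
Definition dB (s : seq nat) := if s is h :: r then uniq r && (h == head 0 r) else false.

Definition step4o (v : nat * nat * nat * nat) :=
  let: (nO, nE, SO, SE) := v in (nO + nE, nO, SE + SO + nO, SO).
Definition step4d (v : nat * nat * nat * nat) :=
  let: (nA, nB, SA, SB) := v in (nA + nB, nA, SA + SB, SA + nA).

Lemma odd_vec M :
  (Sm (fun s => oO s : nat) M.+1, Sm (fun s => oE s : nat) M.+1,
   Sm (fun s => oO s * size s) M.+1, Sm (fun s => oE s * size s) M.+1)
  = iter M step4o (1, 0, 1, 0).
Proof.
elim: M => [|M IH]; first by rewrite /Sm /= !big_cons !big_nil.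
rewrite iterS -IH /step4o.
have Hp : forall s, s \in Pm M.+1 -> exists h r, s = h :: r /\ is_partition (h :: r).
  by move=> s; apply: Pm_cons.
rewrite !(@Sm_S _ M.+1) //.
congr (_, _, _, _).
- rewrite (@Sm_ext _ (fun s => oE s : nat)); last first.
    by move=> s /Hp [h [r [-> _]]]; rewrite /oO /oE /= ?oddS ?negbK andbC.
  rewrite (@Sm_ext (fun s => oO (dupp s) : nat) (fun s => oO s : nat)); first by rewrite addnC.
  by move=> s /Hp [h [r [-> _]]]; rewrite /oO /=; case: (odd h).
- rewrite (@Sm_ext _ (fun s => oO s : nat)); last first.
    by move=> s /Hp [h [r [-> _]]]; rewrite /oO /oE /= ?oddS ?negbK andbC.
  rewrite (@Sm_ext (fun s => oE (dupp s) : nat) (fun _ => 0)) ?Sm0 ?addn0 //.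
  by move=> s /Hp [h [r [-> _]]]; rewrite /oE /=; case: (odd h); rewrite ?andbF.
- rewrite (@Sm_ext _ (fun s => oE s * size s)); last first.
    by move=> s /Hp [h [r [-> _]]]; rewrite /oO /oE /= ?oddS ?negbK andbC.
  rewrite (@Sm_ext (fun s => oO (dupp s) * size (dupp s))
                   (fun s => oO s * size s + oO s)); first by rewrite Sm_add addnA.
  by move=> s /Hp [h [r [-> _]]]; rewrite /oO /=; case: (odd h); case: (all odd r); rewrite /= ?mul0n ?mul1n ?addn1.
- rewrite (@Sm_ext _ (fun s => oO s * size s)); last first.
    by move=> s /Hp [h [r [-> _]]]; rewrite /oO /oE /= ?oddS ?negbK andbC.
  rewrite (@Sm_ext (fun s => oE (dupp s) * size (dupp s)) (fun _ => 0)) ?Sm0 ?addn0 //.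
  by move=> s /Hp [h [r [-> _]]]; rewrite /oE /=; case: (odd h); rewrite ?andbF.
Qed.

Lemma dist_vec M :
  (Sm (fun s => dA s : nat) M.+1, Sm (fun s => dB s : nat) M.+1,
   Sm (fun s => dA s * size s) M.+1, Sm (fun s => dB s * size s) M.+1)
  = iter M step4d (1, 0, 1, 0).
Proof.
elim: M => [|M IH]; first by rewrite /Sm /= !big_cons !big_nil.
rewrite iterS -IH /step4d.
have Hp : forall s, s \in Pm M.+1 -> exists h r, s = h :: r /\ is_partition (h :: r).
  by move=> s; apply: Pm_cons.
have Huq : forall h r, is_partition (h :: r) -> uniq r = dA (h :: r) || dB (h :: r).
  move=> h r H; rewrite /dA /dB /= (part_mem_head H).
  by case: (h == head 0 r); rewrite ?andbT ?andbF /= ?orbF.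
have Hdis : forall h r, is_partition (h :: r) -> ~~ (dA (h :: r) && dB (h :: r)).
  move=> h r H; rewrite /dA /dB /= (part_mem_head H).
  by case: (uniq r); case: (h == head 0 r).
have Hinc : forall h r, is_partition (h :: r) -> ~~ (h.+1 \in r).
  move=> h r H; apply/negP => Hin; have := part_head_max H; move/allP/(_ _ Hin); lia.
rewrite !(@Sm_S _ M.+1) //.
congr (_, _, _, _).
- rewrite (@Sm_ext (fun s => dA (incp s) : nat) (fun s => (dA s : nat) + dB s)); last first.
    move=> s /Hp [h [r [-> H]]]; have -> : dA (incp (h :: r)) = uniq r by rewrite /dA /= (negbTE (Hinc _ _ H)).
    rewrite (Huq _ _ H).
    by move: (Hdis h r H); case: (dA (h :: r)); case: (dB (h :: r)).
  rewrite (@Sm_ext (fun s => dA (dupp s) : nat) (fun _ => 0)) ?Sm0 ?addn0 ?Sm_add //.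
  by move=> s /Hp [h [r [-> _]]]; rewrite /dA /= in_cons eqxx.
- rewrite (@Sm_ext (fun s => dB (incp s) : nat) (fun _ => 0)); last first.
    by move=> s /Hp [h [r [-> H]]]; rewrite /= (part_inc_ne H) andbF.
  rewrite (@Sm_ext (fun s => dB (dupp s) : nat) (fun s => dA s : nat)) ?Sm0 //.
  by move=> s /Hp [h [r [-> _]]]; rewrite /dB /dA /= eqxx andbT.
- rewrite (@Sm_ext (fun s => dA (incp s) * size (incp s)) (fun s => dA s * size s + dB s * size s)); last first.
    move=> s /Hp [h [r [-> H]]]; have -> : dA (incp (h :: r)) = uniq r by rewrite /dA /= (negbTE (Hinc _ _ H)).
    rewrite (Huq _ _ H).
    by move: (Hdis h r H); case: (dA (h :: r)); case: (dB (h :: r)); rewrite /= ?mul0n ?mul1n ?addn0.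
  rewrite (@Sm_ext (fun s => dA (dupp s) * size (dupp s)) (fun _ => 0)) ?Sm0 ?addn0 ?Sm_add //.
  by move=> s /Hp [h [r [-> _]]]; rewrite /dA /= in_cons eqxx.
- rewrite (@Sm_ext (fun s => dB (incp s) * size (incp s)) (fun _ => 0)); last first.
    by move=> s /Hp [h [r [-> H]]]; rewrite /= (part_inc_ne H) andbF.
  rewrite (@Sm_ext (fun s => dB (dupp s) * size (dupp s)) (fun s => dA s * size s + dA s)) ?Sm0 ?Sm_add //.
  move=> s /Hp [h [r [-> _]]]; rewrite /dB /dA /= eqxx andbT.
  by case: (h \in r); case: (uniq r); rewrite /= ?mul0n ?mul1n ?addn1.
Qed.
Definition ev (l : seq nat) := size (undup (filter (fun x => ~~ odd x) l)).

Lemma ev_cons h r : is_partition (h :: r) ->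
  ev (h :: r) = ev r + (~~ odd h && (h != head 0 r)).
Proof.
move=> H; rewrite /ev /=; case Ho: (odd h) => /=; first by rewrite addn0.
rewrite mem_filter Ho /= (part_mem_head H).
by case: (h == head 0 r); rewrite /= ?addn0 ?addn1.
Qed.

Lemma ev_inv h r : is_partition (h :: r) -> ~~ odd h -> h == head 0 r -> 0 < ev r.
Proof.
move=> H Ho Hh; have : h \in undup (filter (fun x => ~~ odd x) r).
  by rewrite mem_undup mem_filter Ho (part_mem_head H).
by rewrite /ev; case: (undup _).
Qed.

Definition rep (l : seq nat) := size [seq x <- undup l | 1 < count_mem x l].

Lemma rep_cons h r : rep (h :: r) = rep r + (count_mem h r == 1).
Proof.
rewrite /rep !size_filter /=.
case Hin: (h \in r).
  have Hu : h \in undup r by rewrite mem_undup.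
  have Hp := perm_to_rem Hu.
  rewrite (permP Hp) [in RHS](permP Hp) /= eqxx.
  have Hc : 0 < count_mem h r by rewrite -has_count has_pred1.
  set X := count _ (rem h (undup r)); set Y := count _ (rem h (undup r)).
  have -> : X = Y.
    rewrite /X /Y; apply: eq_in_count => x.
    rewrite (mem_rem_uniq _ (undup_uniq r)) => /andP[/= Hx _].
    by rewrite eq_sym (negbTE Hx).
  case: (count_mem h r) Hc => [|[|c]] //= _; rewrite ?add1n ?add0n; lia.
rewrite /= eqxx /=.
have -> : count_mem h r = 0 by apply/eqP; rewrite -leqn0 leqNgt -has_count; apply/hasP => [[x Hx /eqP Ex]]; move: Hin; rewrite -Ex Hx.
rewrite /= add0n addn0; apply: eq_in_count => x; rewrite mem_undup => Hx /=.
have -> : (h == x) = false by apply/negbTE/eqP => E; move: Hin; rewrite E Hx.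
by [].
Qed.

Lemma rep_cnt h r : is_partition (h :: r) ->
  (count_mem h r == 1) = (h == head 0 r) && (head 0 r != head 0 (behead r)).
Proof.
move=> H; case: r H => [|b r] H /=; first by rewrite eq_sym; move: H; rewrite part_cons => /and3P[]; case: h.
case: (eqVneq b h) => [Ebh|Hne]; first subst b.
  rewrite add1n eqSS /=.
  have Hp : is_partition (h :: r) by move: H; rewrite part_cons => /and3P[_ _ ->].
  by rewrite -(part_mem_head Hp) -has_pred1 has_count eqn0Ngt.
rewrite add0n /=.
have Hp := part_mem_head H; move: Hp; rewrite in_cons /=.
have -> : (h == b) = false by apply/negbTE; rewrite eq_sym.
move=> /= Hp.
have -> : count_mem h r = 0 by apply/eqP; rewrite eqn0Ngt -has_count has_pred1 Hp.
by [].
Qed.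

Lemma rep_inv h r : is_partition (h :: r) -> h == head 0 r ->
  head 0 r == head 0 (behead r) -> 0 < rep r.
Proof.
move=> H; case: r H => [|b [|c r]] H //=.
  by move=> /eqP E; move: H; rewrite part_cons E.
  by move=> _ /eqP E; move: H; rewrite part_cons => /and3P[_ _]; rewrite part_cons E.
move=> _ /eqP Ebc; rewrite /rep size_filter -has_count; apply/hasP; exists b.
  by rewrite mem_undup in_cons eqxx.
by rewrite /= eqxx -Ebc eqxx.
Qed.
Definition ga (s : seq nat) := if s is h :: r then (ev r == 0) && odd h else false.
Definition gb (s : seq nat) := if s is h :: r then (ev r == 0) && ~~ odd h else false.
Definition gc (s : seq nat) := if s is h :: r then (ev r == 1) && odd h else false.
Definition gd (s : seq nat) := if s is h :: r then [&& ev r == 1, ~~ odd h & h != head 0 r] else false.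
Definition ge (s : seq nat) := if s is h :: r then [&& ev r == 1, ~~ odd h & h == head 0 r] else false.

Definition step5 (v : nat * nat * nat * nat * nat) :=
  let: (a, b, c, d, e) := v in (a + b, a, c + d + e, c, b + e).

Arguments ev : simpl never.
Ltac gtac H h r :=
  rewrite /ga /gb /gc /gd /ge /=;
  rewrite ?(ev_cons H) ?(part_inc_ne H) ?eqxx;
  move: (ev_inv H); case: (ev r) => [|[|?]]; case: (odd h); case: (h == head 0 r);
  move=> Hinv; rewrite /= //; try by have := Hinv isT isT.

Lemma one_even_st h r : is_partition (h :: r) ->
  (one_even_value (h :: r) : nat) = gb (h :: r) + gc (h :: r) + ge (h :: r).
Proof. move=> H; rewrite [one_even_value _](_ : _ = (ev (h :: r) == 1)) //; gtac H h r. Qed.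

Lemma g1_vec M :
  (Sm (fun s => ga s : nat) M.+1, Sm (fun s => gb s : nat) M.+1, Sm (fun s => gc s : nat) M.+1,
   Sm (fun s => gd s : nat) M.+1, Sm (fun s => ge s : nat) M.+1)
  = iter M step5 (1, 0, 0, 0, 0).
Proof.
elim: M => [|M IH]; first by rewrite /Sm /= !big_cons !big_nil.
rewrite iterS -IH /step5.
have Hp : forall s, s \in Pm M.+1 -> exists h r, s = h :: r /\ is_partition (h :: r).
  by move=> s; apply: Pm_cons.
rewrite !(@Sm_S _ M.+1) //.
congr (_, _, _, _, _).
- rewrite (@Sm_ext (fun s => ga (incp s) : nat) (fun s => gb s : nat)); last first.
    by move=> s /Hp [h [r [-> H]]]; gtac H h r.
  rewrite (@Sm_ext (fun s => ga (dupp s) : nat) (fun s => ga s : nat)); first by rewrite addnC.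
  by move=> s /Hp [h [r [-> H]]]; gtac H h r.
- rewrite (@Sm_ext (fun s => gb (incp s) : nat) (fun s => ga s : nat)); last first.
    by move=> s /Hp [h [r [-> H]]]; gtac H h r.
  rewrite (@Sm_ext (fun s => gb (dupp s) : nat) (fun s => 0)) ?Sm0 ?addn0 //.
  by move=> s /Hp [h [r [-> H]]]; gtac H h r.
- rewrite (@Sm_ext (fun s => gc (incp s) : nat) (fun s => (gd s : nat) + ge s)); last first.
    by move=> s /Hp [h [r [-> H]]]; gtac H h r.
  rewrite (@Sm_ext (fun s => gc (dupp s) : nat) (fun s => gc s : nat)); first by rewrite Sm_add addnC addnA.
  by move=> s /Hp [h [r [-> H]]]; gtac H h r.
- rewrite (@Sm_ext (fun s => gd (incp s) : nat) (fun s => gc s : nat)); last first.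
    by move=> s /Hp [h [r [-> H]]]; gtac H h r.
  rewrite (@Sm_ext (fun s => gd (dupp s) : nat) (fun s => 0)) ?Sm0 ?addn0 //.
  by move=> s /Hp [h [r [-> H]]]; gtac H h r.
- rewrite (@Sm_ext (fun s => ge (incp s) : nat) (fun s => 0)); last first.
    by move=> s /Hp [h [r [-> H]]]; gtac H h r.
  rewrite (@Sm_ext (fun s => ge (dupp s) : nat) (fun s => (gb s : nat) + ge s)) ?Sm0 ?add0n ?Sm_add //.
  by move=> s /Hp [h [r [-> H]]]; gtac H h r.
Qed.
Definition hq (r : seq nat) := head 0 r == head 0 (behead r).
Definition hZ (s : seq nat) := if s is h :: r then (rep r == 0) && (h != head 0 r) else false.
Definition hY (s : seq nat) := if s is h :: r then (rep r == 0) && (h == head 0 r) else false.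
Definition hW (s : seq nat) := if s is h :: r then (rep r == 1) && (h != head 0 r) else false.
Definition hV (s : seq nat) := if s is h :: r then [&& rep r == 1, h == head 0 r & ~~ hq r] else false.
Definition hU (s : seq nat) := if s is h :: r then [&& rep r == 1, h == head 0 r & hq r] else false.

Arguments rep : simpl never.

Lemma rep_cons_p h r : is_partition (h :: r) ->
  rep (h :: r) = rep r + ((h == head 0 r) && ~~ hq r).
Proof. by move=> H; rewrite rep_cons (rep_cnt H). Qed.

Lemma hq_cons h r : hq (h :: r) = (h == head 0 r).
Proof. by []. Qed.

Ltac htac H h r :=
  rewrite /hZ /hY /hW /hV /hU /=;
  rewrite ?(rep_cons_p H) ?(part_inc_ne H) ?hq_cons ?eqxx;
  move: (rep_inv H); rewrite -/(hq r);
  case: (rep r) => [|[|?]]; case: (h == head 0 r); case: (hq r);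
  move=> Hinv; rewrite /= //; try by have := Hinv isT isT.

Lemma one_rep_st h r : is_partition (h :: r) ->
  (one_repeated_value (h :: r) : nat) = hY (h :: r) + hW (h :: r) + hU (h :: r).
Proof. move=> H; rewrite [one_repeated_value _](_ : _ = (rep (h :: r) == 1)) //; htac H h r. Qed.

Lemma h1_vec M :
  (Sm (fun s => hZ s : nat) M.+1, Sm (fun s => hY s : nat) M.+1, Sm (fun s => hW s : nat) M.+1,
   Sm (fun s => hV s : nat) M.+1, Sm (fun s => hU s : nat) M.+1)
  = iter M step5 (1, 0, 0, 0, 0).
Proof.
elim: M => [|M IH]; first by rewrite /Sm /= !big_cons !big_nil.
rewrite iterS -IH /step5.
have Hp : forall s, s \in Pm M.+1 -> exists h r, s = h :: r /\ is_partition (h :: r).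
  by move=> s; apply: Pm_cons.
rewrite !(@Sm_S _ M.+1) //.
congr (_, _, _, _, _).
- rewrite (@Sm_ext (fun s => hZ (incp s) : nat) (fun s => (hZ s : nat) + hY s)); last first.
    by move=> s /Hp [h [r [-> H]]]; htac H h r.
  rewrite (@Sm_ext (fun s => hZ (dupp s) : nat) (fun s => 0)) ?Sm0 ?addn0 ?Sm_add //.
  by move=> s /Hp [h [r [-> H]]]; htac H h r.
- rewrite (@Sm_ext (fun s => hY (incp s) : nat) (fun s => 0)); last first.
    by move=> s /Hp [h [r [-> H]]]; htac H h r.
  rewrite (@Sm_ext (fun s => hY (dupp s) : nat) (fun s => hZ s : nat)) ?Sm0 ?add0n //.
  by move=> s /Hp [h [r [-> H]]]; htac H h r.
- rewrite (@Sm_ext (fun s => hW (incp s) : nat) (fun s => (hW s : nat) + hV s + hU s)); last first.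
    by move=> s /Hp [h [r [-> H]]]; htac H h r.
  rewrite (@Sm_ext (fun s => hW (dupp s) : nat) (fun s => 0)) ?Sm0 ?addn0 ?Sm_add //.
  by move=> s /Hp [h [r [-> H]]]; htac H h r.
- rewrite (@Sm_ext (fun s => hV (incp s) : nat) (fun s => 0)); last first.
    by move=> s /Hp [h [r [-> H]]]; htac H h r.
  rewrite (@Sm_ext (fun s => hV (dupp s) : nat) (fun s => hW s : nat)) ?Sm0 ?add0n //.
  by move=> s /Hp [h [r [-> H]]]; htac H h r.
- rewrite (@Sm_ext (fun s => hU (incp s) : nat) (fun s => 0)); last first.
    by move=> s /Hp [h [r [-> H]]]; htac H h r.
  rewrite (@Sm_ext (fun s => hU (dupp s) : nat) (fun s => (hY s : nat) + hU s)) ?Sm0 ?add0n ?Sm_add //.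
  by move=> s /Hp [h [r [-> H]]]; htac H h r.
Qed.
Section Alg.
Import GRing.Theory.
Local Open Scope ring_scope.

Definition qc (j : nat) : int := match j with 0 => 1 | 1 => -2 | 2 => -1 | 3 => 2 | 4 => 1 | _ => 0 end.
Lemma den_coef j : ((1 - 'X - 'X^2) ^+ 2 : {poly int})`_j = qc j.
Proof.
have -> : (1 - 'X - 'X^2) ^+ 2 = 1 - 'X *+ 2 - 'X^2 + 'X^3 *+ 2 + 'X^4 :> {poly int} by ring.
rewrite !(coefD, coefN, coefMn, coefXn, coefX, coef1).
by case: j => [|[|[|[|[|j]]]]].
Qed.
Lemma num_coef j : ('X^2 - 'X^3 : {poly int})`_j = (j == 2)%:R - (j == 3)%:R.
Proof. by rewrite coefB !coefXn. Qed.

Lemma gf_rec (a : nat -> int) : a 0 = 0 -> a 1 = 0 -> a 2 = 1 -> a 3 = 1 ->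
  (forall n, a n.+4 - 2 * a n.+3 - a n.+2 + 2 * a n.+1 + a n = 0) ->
  gf_eq a ('X^2 - 'X^3) ((1 - 'X - 'X^2) ^+ 2).
Proof.
move=> a0 a1 a2 a3 Hr n; rewrite num_coef.
under eq_bigr do rewrite den_coef.
case: n => [|[|[|[|n]]]].
- by rewrite big_ord_recr big_ord0 /= ?a0; lia.
- by rewrite !big_ord_recr big_ord0 /= ?a0 ?a1; lia.
- by rewrite !big_ord_recr big_ord0 /= ?a0 ?a1 ?a2; lia.
- by rewrite !big_ord_recr big_ord0 /= ?a0 ?a1 ?a2 ?a3; lia.
rewrite !big_ord_recr /= big1 => [|i _]; last first.
  have : (4 < n.+4 - i)%N by have := ltn_ord i; lia.
  by case: (n.+4 - i)%N => [|[|[|[|[|?]]]]] //; rewrite mulr0.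
have -> : (n.+4 - n = 4)%N by lia.
have -> : (n.+4 - n.+1 = 3)%N by lia.
have -> : (n.+4 - n.+2 = 2)%N by lia.
have -> : (n.+4 - n.+3 = 1)%N by lia.
rewrite subnn /=; have := Hr n; lia.
Qed.
End Alg.
Definition init5 := (1, 0, 0, 0, 0).
Definition T5 (v : nat * nat * nat * nat * nat) := let: (a, b, c, d, e) := v in b + c + e.
Definition S4 (v : nat * nat * nat * nat) := let: (a, b, c, d) := v in c.

Lemma g1_0 : g1 0 = 0.
Proof. by rewrite /g1 count_Sm /Sm big_nil. Qed.
Lemma h1_0 : h1 0 = 0.
Proof. by rewrite /h1 count_Sm /Sm big_nil. Qed.

Lemma g1E M : g1 M.+1 = T5 (iter M step5 init5).
Proof.
rewrite /g1 count_Sm.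
rewrite (@Sm_ext _ (fun s => (gb s : nat) + gc s + ge s)); last first.
  by move=> s /Pm_cons [h [r [-> H]]]; apply: one_even_st.
rewrite !Sm_add; have := g1_vec M; rewrite /init5.
by case: (iter M step5 _) => [[[[a b] c] d] e] [_ -> -> _ ->].
Qed.

Lemma h1E M : h1 M.+1 = T5 (iter M step5 init5).
Proof.
rewrite /h1 count_Sm.
rewrite (@Sm_ext _ (fun s => (hY s : nat) + hW s + hU s)); last first.
  by move=> s /Pm_cons [h [r [-> H]]]; apply: one_rep_st.
rewrite !Sm_add; have := h1_vec M; rewrite /init5.
by case: (iter M step5 _) => [[[[a b] c] d] e] [_ -> -> _ ->].
Qed.

Lemma gE M : g M.+1 = S4 (iter M step4o (1, 0, 1, 0)).
Proof.
rewrite /g sum_Sm; have := odd_vec M.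
by case: (iter M step4o _) => [[[a b] c] d] [_ _ <- _].
Qed.

Lemma hE M : h M.+1 = S4 (iter M step4d (1, 0, 1, 0)).
Proof.
rewrite /h sum_Sm; have := dist_vec M.
by case: (iter M step4d _) => [[[a b] c] d] [_ _ <- _].
Qed.

Section Final.
Local Open Scope ring_scope.

Lemma gf_T5 (f : nat -> nat) : f 0 = 0%N -> (forall M, f M.+1 = T5 (iter M step5 init5)) ->
  gf_eq (diff_seq f) ('X^2 - 'X^3) ((1 - 'X - 'X^2) ^+ 2).
Proof.
move=> f0 fE; apply: gf_rec; rewrite /diff_seq ?f0 ?fE //.
move=> [|[|m]]; rewrite /diff_seq /= ?f0 !fE //.
rewrite !iterS; move: (iter m step5 init5) => [[[[a b] c] d] e] /=; lia.
Qed.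

Lemma gf_gh :
  gf_eq (fun M => if M is 0 then 0%R else ((g M)%:Z - (h M)%:Z)%R) ('X^2 - 'X^3) ((1 - 'X - 'X^2) ^+ 2).
Proof.
apply: gf_rec; rewrite ?gE ?hE //.
move=> [|m]; rewrite !gE !hE //.
rewrite !iterS; move: (iter m step4o _) (iter m step4d _) => [[[a b] c] d] [[[a' b'] c'] d'] /=; lia.
Qed.
End Final.

Theorem mainTheorem4 :
  let num : {poly int} := ('X^2 - 'X^3)%R in
  let den : {poly int} := ((1 - 'X - 'X^2) ^+ 2)%R in
  g1 0 = 0%N /\ h1 0 = 0%N /\
  gf_eq (diff_seq g1) num den /\
  gf_eq (diff_seq h1) num den /\
  gf_eq (fun M => if M is 0 then 0%R else ((g M)%:Z - (h M)%:Z)%R) num den.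
Proof.
move=> num den; split; first exact: g1_0.
split; first exact: h1_0.
split; first exact: (gf_T5 g1_0 g1E).
split; first exact: (gf_T5 h1_0 h1E).
exact: gf_gh.
Qed.
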